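(* Let $\kappa\ge 3$ and $n\ge 1$ be integers, $r=\lfloor(\kappa-2)/2\rfloor$, $r'=\lceil(\kappa-2)/2\rceil$, and let $F$ be a field. Let $p=(p_m)_{m\in\mathbb Z}$, $q=(q_m)_{m\in\mathbb Z}$ be $n$-periodic sequences in $F$, and write $(p^{(k)},q^{(k)})=\Phi^k(p,q)$ for $k\in\mathbb Z$, where $\Phi$ is the map defined below; assume all these iterates are defined (no division by zero occurs). Let $Y:\{(i,j,k)\in\mathbb Z^3: i+j+k\equiv 0 \bmod 2\}\to F\setminus\{0,-1\}$ satisfy the $Y$-system $$Y_{i,j,k+1}Y_{i,j,k-1}=\frac{(1+Y_{i+1,j,k})(1+Y_{i-1,j,k})}{(1+Y_{i,j+1,k}^{-1})(1+Y_{i,j-1,k}^{-1})}\quad\text{for all }(i,j,k)\text{ with } i+j+k\text{ odd},$$ with initial conditions $$Y_{i,j,-1}=\Big(q_{((\kappa-2)i+\kappa j+r-r')/2}\Big)^{-1}\ (i+j\text{ odd}),\qquad Y_{i,j,0}=p_{((\kappa-2)i+\kappa j)/2}\ (i+j\text{ even}).$$ Then for all $i,j,k\in\mathbb Z$: $$p^{(k)}_{((\kappa-2)i+\kappa j+k(r-r'))/2}=Y_{i,j,k}\quad\text{if } i+j+k\equiv 0\bmod 2,$$ $$q^{(k)}_{((\kappa-2)i+\kappa j+(k+1)(r-r'))/2}=Y_{i,j,k-1}^{-1}\quad\text{if } i+j+k\equiv 1\bmod 2.$$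
   Context: The map $\Phi$ (the higher pentagram map $T_\kappa$ written in the $(p,q)$ coordinates of twisted $n$-gons) sends a pair of $n$-periodic sequences $(p,q)$ to $(p',q')$ with $$q'_m=p_{m+r'-r}^{-1},\qquad p'_m=q_m\,\frac{(1+p_{m-r})(1+p_{m+r'})}{(1+p_{m-r-1}^{-1})(1+p_{m+r'+1}^{-1})}.$$ $\Phi$ is invertible where defined (one recovers $p$ from $q'$ and then $q$ from $p'$), and for $k<0$, $\Phi^k$ denotes the $|k|$-fold iterate of $\Phi^{-1}$. All subscripts appearing are integers. *)

(* Defs.v *)
From HB Require Import structures.
From mathcomp Require Import all_boot all_order all_algebra.
Set Implicit Arguments. Unset Strict Implicit. Unset Printing Implicit Defensive.
Import Order.TTheory GRing.Theory Num.Theory.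
Local Open Scope ring_scope.

Definition rr (kappa : nat) : int := ((kappa - 2)./2)%N%:Z.
Definition rr' (kappa : nat) : int := (uphalf (kappa - 2))%N%:Z.

Section Pent.
Variable F : fieldType.
Variable kappa : nat.
Notation r := (rr kappa).
Notation r' := (rr' kappa).

Definition pqseq := ((int -> F) * (int -> F))%type.

Definition Phi (pq : pqseq) : pqseq :=
  let p := pq.1 in let q := pq.2 in
  (fun m => q m * ((1 + p (m - r)) * (1 + p (m + r')))
                 / ((1 + (p (m - r - 1))^-1) * (1 + (p (m + r' + 1))^-1)),
   fun m => (p (m + r' - r))^-1).

Definition Phi_dom (pq : pqseq) : Prop :=
  forall m : int, pq.1 m != 0 /\ 1 + (pq.1 m)^-1 != 0.

Definition PhiInv (pq' : pqseq) : pqseq :=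
  let p' := pq'.1 in let q' := pq'.2 in
  let p := fun m => (q' (m - r' + r))^-1 in
  (p,
   fun m => p' m * ((1 + (p (m - r - 1))^-1) * (1 + (p (m + r' + 1))^-1))
                 / ((1 + p (m - r)) * (1 + p (m + r')))).

Definition PhiInv_dom (pq' : pqseq) : Prop :=
  forall m : int, pq'.2 m != 0 /\ 1 + (pq'.2 (m - r' + r))^-1 != 0.

Definition Phi_pow (k : int) (pq : pqseq) : pqseq :=
  match k with
  | Posz n => iter n Phi pq
  | Negz n => iter n.+1 PhiInv pq
  end.

End Pent.

Definition periodic (F : Type) (n : nat) (s : int -> F) : Prop :=
  forall m : int, s (m + n%:Z) = s m.

(* Main.v *)
Require Import Defs.
From HB Require Import structures.
From mathcomp Require Import all_boot all_order all_algebra.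
From mathcomp Require Import zify ring.
Import Order.TTheory GRing.Theory Num.Theory.
Local Open Scope ring_scope.

Definition idx (kappa : nat) (i j k : int) : int :=
  (((kappa%:Z - 2) * i + kappa%:Z * j + k * (rr kappa - rr' kappa)) %/ 2)%Z.

Definition Good (kappa : nat) (F : fieldType) (Y : int -> int -> int -> F)
  (pq : pqseq F) (k : int) : Prop :=
  (forall i j : int, (2 %| i + j + k)%Z -> pq.1 (idx kappa i j k) = Y i j k) /\
  (forall i j : int, ~~ (2 %| i + j + k)%Z ->
      pq.2 (idx kappa i j (k + 1)) = (Y i j (k - 1))^-1).

Arguments Good kappa {F} Y pq k.

Lemma rr_sum kappa : (2 <= kappa)%N -> rr kappa + rr' kappa = kappa%:Z - 2.
Proof. move=> h; rewrite /rr /rr'; lia. Qed.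

Lemma idx_facts kappa i j k : (2 <= kappa)%N ->
  [/\ idx kappa (i-1) j k = idx kappa i j (k+1) - rr kappa,
      idx kappa (i+1) j k = idx kappa i j (k+1) + rr' kappa,
      idx kappa i (j-1) k = idx kappa i j (k+1) - rr kappa - 1,
      idx kappa i (j+1) k = idx kappa i j (k+1) + rr' kappa + 1 &
      [/\ idx kappa i j (k+1+1) + rr' kappa - rr kappa = idx kappa i j k,
          idx kappa i j k - rr' kappa + rr kappa = idx kappa i j (k+1+1),
          idx kappa (i-1) j k = idx kappa i j (k+1) - rr kappa &
          True]].
Proof.
move=> h; have := rr_sum kappa h; rewrite /idx.
move: (rr kappa) (rr' kappa) => a b hab.
have -> : kappa%:Z = a + b + 2 by lia.
split; try lia; split; lia.
Qed.

Lemma onep_neq0 (F : fieldType) (y : F) : y != -1 -> 1 + y != 0.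
Proof.
move=> hy; apply/negP => /eqP h; move/negP: hy; apply; apply/eqP.
by rewrite -(addKr 1 y) h addr0.
Qed.

Lemma onepV_neq0 (F : fieldType) (y : F) : y != 0 -> y != -1 -> 1 + y^-1 != 0.
Proof.
move=> h0 h1.
have -> : 1 + y^-1 = (y + 1) * y^-1 by rewrite mulrDl divff // mul1r.
by rewrite mulf_neq0 ?invr_eq0 // addrC onep_neq0.
Qed.

Lemma alg1 (F:fieldType) (a n1 n2 d1 d2 y : F) :
  a != 0 -> y * a = n2*n1/(d2*d1) -> a^-1 * (n1*n2)/(d1*d2) = y.
Proof. move=> ha h. rewrite -[y](mulfK ha) h (mulrC d2 d1) (mulrC n2 n1).
move: (d1*d2)^-1 a^-1 => u v; ring. Qed.

Lemma alg2 (F:fieldType) (a n d y : F) :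
  a != 0 -> n != 0 -> d != 0 -> y * a = n/d -> y * d / n = a^-1.
Proof. move=> ha hn hd h. rewrite -[y](mulfK ha) h. field. by rewrite ha hn hd. Qed.

Section Steps.
Variables (kappa : nat) (F : fieldType) (Y : int -> int -> int -> F).
Hypothesis hk : (2 <= kappa)%N.
Hypothesis HY : forall i j k : int, (2 %| i + j + k)%Z -> Y i j k != 0 /\ Y i j k != -1.
Hypothesis Hsys : forall i j k : int, ~~ (2 %| i + j + k)%Z ->
     Y i j (k + 1) * Y i j (k - 1) =
     (1 + Y (i + 1) j k) * (1 + Y (i - 1) j k)
       / ((1 + (Y i (j + 1) k)^-1) * (1 + (Y i (j - 1) k)^-1)).

Lemma step_fwd pq k : Good kappa Y pq k -> Good kappa Y (Phi kappa pq) (k + 1).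
Proof.
case=> G1 G2; split=> i j H.
- have [E1 E2 E3 E4 _] := idx_facts kappa i j k hk.
  rewrite /Phi /= -E3 -E4 -E1 -E2.
  rewrite G2; last by move: H; lia.
  rewrite !G1; try (move: H; lia).
  apply: alg1; first by case: (HY i j (k-1)) => //; move: H; lia.
  by apply: Hsys; move: H; lia.
- have [_ _ _ _ [E5 _ _ _]] := idx_facts kappa i j k hk.
  rewrite /Phi /= E5 G1; last by move: H; lia.
  by rewrite addrK.
Qed.

Lemma step_bwd pq k : Good kappa Y pq (k + 1) -> Good kappa Y (PhiInv kappa pq) k.
Proof.
case=> G1 G2.
have P1 : forall i j, (2 %| i + j + k)%Z -> (PhiInv kappa pq).1 (idx kappa i j k) = Y i j k.
  move=> i j H.
  have [_ _ _ _ [_ E6 _ _]] := idx_facts kappa i j k hk.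
  rewrite /PhiInv /= E6 G2; last by move: H; lia.
  by rewrite addrK invrK.
split=> // i j H.
have [E1 E2 E3 E4 _] := idx_facts kappa i j k hk.
set x := idx kappa i j (k + 1).
have -> : (PhiInv kappa pq).2 x = pq.1 x *
   ((1 + ((PhiInv kappa pq).1 (x - rr kappa - 1))^-1) *
    (1 + ((PhiInv kappa pq).1 (x + rr' kappa + 1))^-1))
   / ((1 + (PhiInv kappa pq).1 (x - rr kappa)) * (1 + (PhiInv kappa pq).1 (x + rr' kappa))) by [].
rewrite /x -E3 -E4 -E1 -E2 G1; last by move: H; lia.
rewrite !P1; try (move: H; lia).
rewrite [(1 + (Y i (j-1) k)^-1) * _]mulrC [(1 + Y (i-1) j k) * _]mulrC.
have [a1 a2] : Y (i+1) j k != 0 /\ Y (i+1) j k != -1 by apply: HY; move: H; lia.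
have [b1 b2] : Y (i-1) j k != 0 /\ Y (i-1) j k != -1 by apply: HY; move: H; lia.
have [c1 c2] : Y i (j+1) k != 0 /\ Y i (j+1) k != -1 by apply: HY; move: H; lia.
have [d1 d2] : Y i (j-1) k != 0 /\ Y i (j-1) k != -1 by apply: HY; move: H; lia.
apply: alg2.
- by case: (HY i j (k-1)) => //; move: H; lia.
- by rewrite mulf_neq0 // onep_neq0.
- by rewrite mulf_neq0 // onepV_neq0.
- by apply: Hsys.
Qed.

Lemma step_bwd' pq k kk : kk = k + 1 -> Good kappa Y pq kk -> Good kappa Y (PhiInv kappa pq) k.
Proof. by move=> ->; apply: step_bwd. Qed.

End Steps.

Theorem mainTheorem1 (kappa n : nat) (F : fieldType)
    (p q : int -> F) (Y : int -> int -> int -> F) :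
  (3 <= kappa)%N -> (1 <= n)%N ->
  periodic n p -> periodic n q ->
  (* all iterates Phi^k (p,q), k in Z, are defined *)
  (forall k : nat, Phi_dom (iter k (Phi kappa) (p, q))
                   /\ PhiInv_dom kappa (iter k (PhiInv kappa) (p, q))) ->
  (* Y takes values in F \ {0,-1} on its domain *)
  (forall i j k : int, (2 %| i + j + k)%Z -> Y i j k != 0 /\ Y i j k != -1) ->
  (* the Y-system *)
  (forall i j k : int, ~~ (2 %| i + j + k)%Z ->
     Y i j (k + 1) * Y i j (k - 1) =
     (1 + Y (i + 1) j k) * (1 + Y (i - 1) j k)
       / ((1 + (Y i (j + 1) k)^-1) * (1 + (Y i (j - 1) k)^-1))) ->
  (* initial conditions *)
  (forall i j : int, ~~ (2 %| i + j)%Z ->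
     Y i j (-1) = (q ((((kappa%:Z - 2) * i + kappa%:Z * j
                        + rr kappa - rr' kappa) %/ 2)%Z))^-1) ->
  (forall i j : int, (2 %| i + j)%Z ->
     Y i j 0 = p ((((kappa%:Z - 2) * i + kappa%:Z * j) %/ 2)%Z)) ->
  forall i j k : int,
    ((2 %| i + j + k)%Z ->
       (Phi_pow kappa k (p, q)).1
         ((((kappa%:Z - 2) * i + kappa%:Z * j + k * (rr kappa - rr' kappa)) %/ 2)%Z)
       = Y i j k) /\
    (~~ (2 %| i + j + k)%Z ->
       (Phi_pow kappa k (p, q)).2
         ((((kappa%:Z - 2) * i + kappa%:Z * j + (k + 1) * (rr kappa - rr' kappa)) %/ 2)%Z)
       = (Y i j (k - 1))^-1).
Proof.
move=> hk3 _ _ _ _ HY Hsys Hq Hp.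
have hk : (2 <= kappa)%N by apply: leq_trans hk3.
have G0 : Good kappa Y (p, q) 0.
  split=> i j H /=.
  - rewrite Hp; last by move: H; rewrite addr0.
    by rewrite /idx mul0r addr0.
  - rewrite sub0r Hq ?invrK; last by move: H; rewrite addr0.
    by rewrite /idx add0r mul1r addrA.
have fwd : forall m : nat, Good kappa Y (iter m (Phi kappa) (p, q)) m.
  elim=> [|m IH] //=.
  have -> : Posz m.+1 = m%:Z + 1 by rewrite -addn1 PoszD.
  exact: step_fwd.
have bwd : forall m : nat, Good kappa Y (iter m.+1 (PhiInv kappa) (p, q)) (Negz m).
  elim=> [|m IH].
  - by apply: (@step_bwd' kappa F Y hk HY Hsys _ _ 0) => //; rewrite NegzE; lia.
  - rewrite iterS; apply: (@step_bwd' kappa F Y hk HY Hsys _ _ (Negz m)) => //.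
    rewrite !NegzE; lia.
move=> i j [] m.
- by have [A B] := fwd m; split; [exact: A | exact: B].
- by have [A B] := bwd m; split; [exact: A | exact: B].
Qed.
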